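(* Let $u$ be a one-sided Sturmian sequence, with $(X_u^+,\sigma)$ its associated Sturmian system and left special sequence $l=l_1l_2\dots$, $L_n=l_1\dots l_n$. Then for each $n\ge2$ there are exactly two significant blocks of $\tilde X_u$ of length $n$, namely $0L_{n-1}=0l_1\dots l_{n-1}$ and $1L_{n-1}=1l_1\dots l_{n-1}$.
   Context: A sequence $u\in\{0,1\}^{\mathbb N}$ is Sturmian if for every $n\ge1$ exactly $n+1$ distinct blocks of length $n$ occur in $u$. $X_u^+$ is the closure of $\{\sigma^n u:n\in\mathbb N\}$, $\sigma$ the shift $(\sigma x)_i=x_{i+1}$, and $\tilde X_u=\{x\in\{0,1\}^{\mathbb Z}: x_px_{p+1}\dots\in X_u^+\ \forall p\}$ its natural extension; the languages of $u$, $X_u^+$ and $\tilde X_u$ coincide. For each $n$ there is a unique block $L_n$ of length $n$ with $0L_n$ and $1L_n$ both in the language; these are the prefixes of an infinite sequence $l$ (the left special sequence). For a block $a_{-n}\dots a_0$ in the language, $\mathrm{fol}(a_{-n}\dots a_0)=\{b_0b_1\dots\in X_u^+:\exists b\in\tilde X_u,\ b_{-n}\dots b_0=a_{-n}\dots a_0\}$. A block $a_{-n}\dots a_0$ ($n\ge1$) is significant if $\mathrm{fol}(a_{-n}\dots a_0)\subsetneq\mathrm{fol}(a_{-n+1}\dots a_0)$. *)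

(* Defs.v *)
(* Alphabet {0,1} rendered as bool (0 = false, 1 = true). *)
From mathcomp Require Import all_boot all_order all_algebra.
Set Implicit Arguments. Unset Strict Implicit. Unset Printing Implicit Defensive.
Import GRing.Theory Num.Theory.
Local Open Scope ring_scope.

Definition occurs (u : nat -> bool) (w : seq bool) : Prop :=
  exists m : nat, w = mkseq (fun i => u (m + i)%N) (size w).

Definition sturmian (u : nat -> bool) : Prop :=
  forall n : nat, (1 <= n)%N ->
    exists s : seq (seq bool),
      [/\ uniq s, size s = n.+1 &
          forall w, w \in s <-> (size w = n /\ occurs u w)].

(* X_u^+ : closure of the orbit of u in the product topology on {0,1}^N
   (basic open sets are cylinders fixing the first k coordinates). *)
Definition Xplus (u : nat -> bool) (x : nat -> bool) : Prop :=
  forall k : nat, exists m : nat, forall i : nat, (i < k)%N -> x i = u (m + i)%N.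

Definition Xtilde (u : nat -> bool) (x : int -> bool) : Prop :=
  forall p : int, Xplus u (fun i : nat => x (p + i%:Z)).

(* fol(a_{-n} ... a_0) for the block w = [a_{-n}; ...; a_0] (n = size w - 1) *)
Definition fol (u : nat -> bool) (w : seq bool) (y : nat -> bool) : Prop :=
  Xplus u y /\
  exists b : int -> bool,
    [/\ Xtilde u b,
        (forall k : nat, (k < size w)%N ->
           b (k%:Z - (size w).-1%:Z) = nth false w k) &
        (forall i : nat, b i%:Z = y i)].

Definition significant (u : nat -> bool) (w : seq bool) : Prop :=
  [/\ (2 <= size w)%N, occurs u w,
      (forall y, fol u w y -> fol u (behead w) y) &
      exists y, fol u (behead w) y /\ ~ fol u w y].

(* Main.v *)
Require Import Defs.
From mathcomp Require Import all_boot all_order all_algebra.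
From mathcomp Require Import zify.
From Stdlib Require Import ClassicalEpsilon Classical.
Set Implicit Arguments. Unset Strict Implicit. Unset Printing Implicit Defensive.

Definition dec (P : Prop) : bool := if excluded_middle_informative P then true else false.
Lemma decP (P : Prop) : reflect P (dec P).
Proof. rewrite /dec; case: excluded_middle_informative => h; constructor => //. Qed.

Lemma dec_true (P : Prop) : P -> dec P = true.
Proof. by move=> H; apply/decP. Qed.
Lemma dec_false (P : Prop) : ~ P -> dec P = false.
Proof. by move=> H; apply/negP => /decP. Qed.

Fixpoint allw k : seq (seq bool) :=
  if k is k'.+1 then [seq b :: w | b <- [:: false; true], w <- allw k'] else [:: [::]].

Lemma mem_allw k w : (w \in allw k) = (size w == k).
Proof.
elim: k w => [|k IH] [|b w] //=.
  by rewrite cats0 mem_cat; apply/negP; case/orP => /mapP [].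
have inj (c : bool) : injective (cons c) by move=> x y [].
rewrite cats0 mem_cat eqSS; case: b.
  rewrite (mem_map (inj true)) IH.
  by have -> : (true :: w \in [seq false :: w0 | w0 <- allw k]) = false by apply/mapP => -[].
rewrite (mem_map (inj false)) IH.
have -> : (false :: w \in [seq true :: w0 | w0 <- allw k]) = false by apply/mapP => -[].
by rewrite orbF.
Qed.



Lemma uniq_allw k : uniq (allw k).
Proof.
elim: k => [|k IH] //=; rewrite cat_uniq map_inj_uniq //; last by move=> x y [].
rewrite IH /= cats0 map_inj_uniq ?IH ?andbT; last by move=> x y [].
by apply/hasPn => x /mapP [w _ ->]; apply/mapP => -[w' _ []].
Qed.

Definition lang u k := [seq w <- allw k | dec (occurs u w)].

Lemma mem_lang u k w : w \in lang u k <-> size w = k /\ occurs u w.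
Proof.
rewrite mem_filter mem_allw; split.
  by case/andP => /decP H /eqP.
by case=> -> H; rewrite eqxx andbT; apply/decP.
Qed.

Lemma uniq_lang u k : uniq (lang u k).
Proof. exact/filter_uniq/uniq_allw. Qed.

Lemma size_lang u (hu : sturmian u) k : 1 <= k -> size (lang u k) = k.+1.
Proof.
move=> hk; have [s [us ss Hs]] := hu k hk.
rewrite -ss; apply/eqP; rewrite eqn_leq.
rewrite (uniq_leq_size (uniq_lang u k)) ?(uniq_leq_size us) //.
  by move=> w /Hs H; apply/mem_lang.
by move=> w /mem_lang H; apply/Hs.
Qed.

Definition win (u : nat -> bool) m k := mkseq (fun i => u (m + i)) k.

Lemma occursP u w : occurs u w <-> exists m, forall i, i < size w -> nth false w i = u (m + i).
Proof.
split=> [[m Hm]|[m Hm]]; exists m.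
  by move=> i hi; rewrite Hm nth_mkseq // -Hm.
apply: (@eq_from_nth _ false); rewrite ?size_mkseq // => i hi.
by rewrite nth_mkseq // Hm.
Qed.

Lemma occurs_win u m k : occurs u (win u m k).
Proof. by exists m; rewrite size_mkseq. Qed.

Lemma win_eqP u m m' k : win u m k = win u m' k <-> forall i, i < k -> u (m + i) = u (m' + i).
Proof.
split=> [H i hi|H].
  by have := congr1 (nth false ^~ i) H; rewrite !nth_mkseq.
apply: (@eq_from_nth _ false); rewrite ?size_mkseq // => i hi.
by rewrite !nth_mkseq // H.
Qed.
Lemma win_rcons u m k : win u m k.+1 = rcons (win u m k) (u (m + k)).
Proof. by rewrite /win mkseqS. Qed.

Lemma occurs_size_win u w : occurs u w -> exists m, w = win u m (size w).
Proof. by []. Qed.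

Lemma right_ext v k x : size x = k -> occurs v (rcons x false) -> occurs v (rcons x true) ->
  size (lang v k) < size (lang v k.+1).
Proof.
move=> sx Hf Ht.
pose r w := dec (occurs v (rcons w true)).
pose T := [seq rcons w (r w) | w <- lang v k] ++ [:: rcons x (~~ r x)].
have -> : (size (lang v k)).+1 = size T by rewrite size_cat size_map addn1.
apply: uniq_leq_size.
  rewrite cat_uniq /= andbT map_inj_uniq ?uniq_lang; last by move=> a b /rcons_inj [].
  rewrite orbF /=; apply/negP => /mapP [w _ /rcons_inj [E]]; rewrite E; by case: (r w).
move=> z; rewrite mem_cat => /orP [/mapP [w /mem_lang [sw [m Hm]] ->]|].
  apply/mem_lang; split; first by rewrite size_rcons sw.
  have [Hp|Hn] := classic (occurs v (rcons w true)); rewrite /r ?(dec_true Hp) // (dec_false Hn).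
  have E : rcons w (v (m + k)) = win v m k.+1 by rewrite win_rcons Hm sw.
  case E' : (v (m + k)) E => E; first by exfalso; apply: Hn; rewrite E; apply: occurs_win.
  by rewrite E; apply: occurs_win.
rewrite inE => /eqP ->; apply/mem_lang; split; first by rewrite size_rcons sx.
by case: (r x).
Qed.

Lemma not_eperiodic u (hu : sturmian u) N0 d : 0 < d ->
  (forall t, u (N0 + t) = u (N0 + d + t)) -> False.
Proof.
move=> d0 H.
have per x : u (N0 + x) = u (N0 + x %% d).
  elim/ltn_ind: x => x IH.
  case: (ltnP x d) => hx; first by rewrite modn_small.
  have -> : x = (x - d) + d by rewrite subnK.
  rewrite modnDr -IH; last by lia.
  by rewrite [RHS]H; congr u; lia.
pose K := N0 + d.
pose s := [seq win u m K | m <- iota 0 K].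
have : size (lang u K) <= size s.
  apply: uniq_leq_size; first exact: uniq_lang.
  move=> w /mem_lang [sw [m Hm]]; apply/mapP.
  exists (if m < N0 then m else N0 + (m - N0) %% d).
    rewrite mem_iota add0n; case: ifP => hm; first by rewrite /K; lia.
    by rewrite /K ltn_add2l ltn_mod.
  rewrite Hm sw; apply/win_eqP => i _; case: ifP => // hm.
  have -> : m + i = N0 + (m - N0 + i) by lia.
  by rewrite [LHS]per -addnA [RHS]per modnDml.
by rewrite (size_lang hu) /s ?size_map ?size_iota ?ltnn // /K; lia.
Qed.

Lemma prefix_rec u (hu : sturmian u) e : exists2 p, 0 < p & win u p e = win u 0 e.
Proof.
case: e => [|e]; first by exists 1.
apply: NNPP => H.
have H' : forall p, 0 < p -> win u p e.+1 <> win u 0 e.+1 by move=> p hp E; apply: H; exists p.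
set E := e.+1.
pose v := fun i => u i.+1.
have winv m k : win v m k = win u m.+1 k by apply: eq_mkseq => i /=; rewrite addSn.
have q0 : size (lang v 0) = 1.
  by rewrite /lang /= dec_true //; exists 0.
have qe : size (lang v E) <= E.
  have : size (win u 0 E :: lang v E) <= size (lang u E).
    apply: uniq_leq_size.
      rewrite /= uniq_lang andbT; apply/negP => /mem_lang [_ [m Hm]].
      rewrite size_mkseq -/(win v m E) winv in Hm.
      exact: (H' m.+1 _ (esym Hm)).
    move=> w; rewrite inE => /orP [/eqP ->|/mem_lang [sw [m Hm]]]; apply/mem_lang.
      by split; [rewrite size_mkseq | exact: occurs_win].
    split => //; exists m.+1; rewrite {1}Hm; exact: (winv m (size w)).
  by rewrite /= (size_lang hu).
have [k [hk hq]] : exists k, k < E /\ size (lang v k.+1) <= size (lang v k).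
  apply: NNPP => Hn.
  have : forall k, k <= E -> k.+1 <= size (lang v k).
    elim=> [|k IH] hk; first by rewrite q0.
    have : ~ (k < E /\ size (lang v k.+1) <= size (lang v k)) by move=> h; apply Hn; exists k.
    have := IH (ltnW hk); lia.
  move=> /(_ E (leqnn E)); lia.
have uext x : size x = k -> occurs v (rcons x false) -> occurs v (rcons x true) -> False.
  by move=> sx hf ht; have := right_ext sx hf ht; lia.
pose s := [seq win v i k | i <- iota 0 (size (lang v k)).+1].
have Hsub : {subset s <= lang v k}.
  by move=> w /mapP [i _ ->]; apply/mem_lang; split; [rewrite size_mkseq | exact: occurs_win].
have : ~~ uniq s.
  by apply/negP => us; have := uniq_leq_size us Hsub; rewrite size_map size_iota ltnn.
case/(uniqPn [::]) => i [j [hij hj]]; rewrite size_map size_iota in hj.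
rewrite !(nth_map 0) ?size_iota ?nth_iota ?add0n; try lia.
move=> Ew.
have per t : v (i + t) = v (j + t).
  elim/ltn_ind: t => t IH.
  case: (ltnP t k) => ht; first by move/win_eqP: Ew; apply.
  set t' := t - k.
  have Ew' : win v (i + t') k = win v (j + t') k.
    by apply/win_eqP => l hl; rewrite -!addnA; apply: IH; lia.
  apply: NNPP => hne.
  have e1 : rcons (win v (i+t') k) (v (i + t)) = win v (i+t') k.+1.
    by rewrite win_rcons; congr rcons; congr v; lia.
  have e2 : rcons (win v (i+t') k) (v (j + t)) = win v (j+t') k.+1.
    by rewrite win_rcons Ew'; congr rcons; congr v; lia.
  have o1 := occurs_win v (i+t') k.+1; have o2 := occurs_win v (j+t') k.+1.
  rewrite -e1 in o1; rewrite -e2 in o2.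
  apply: (uext (win v (i+t') k)); first by rewrite size_mkseq.
    by move: hne o1 o2; case: (v (i+t)); case: (v (j+t)).
  by move: hne o1 o2; case: (v (i+t)); case: (v (j+t)).
apply: (@not_eperiodic u hu i.+1 (j - i)); first lia.
move=> t; have := per t; rewrite /v => Et; rewrite addSn Et; congr u; lia.
Qed.

Lemma xt_exists u (hu : sturmian u) M E : exists b : int -> bool,
  Xtilde u b /\ (forall t, t < E -> b (t%:Z - M%:Z)%R = u t).
Proof.
pose P e := fun q => (0 < q) && (win u q e == win u 0 e).
have exP e : exists q, P e q.
  by have [q h1 h2] := prefix_rec hu e; exists q; rewrite /P h1 h2 eqxx.
pose p e := xchoose (exP e).
have pP e : 0 < p e /\ forall t, t < e -> u (p e + t) = u t.
  have /andP [h1 /eqP h2] := xchooseP (exP e); split => // t ht.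
  by move/win_eqP: h2 => h2; rewrite h2.
pose E0 := maxn E M.+1.
have hE0 : M < E0 /\ E <= E0 by rewrite /E0; lia.
pose f (x : nat * nat) := (x.1 + p x.2, p x.2 + x.2 + 1).
pose o j := (iter j f (M, E0)).1.
pose e j := (iter j f (M, E0)).2.
have oS j : o j.+1 = o j + p (e j) by [].
have eS j : e j.+1 = p (e j) + e j + 1 by [].
have o0 : o 0 = M by [].
have e0 : e 0 = E0 by [].
have oge j : M + j <= o j.
  elim: j => [|j IH]; first by rewrite o0 addn0.
  by rewrite oS; have := (pP (e j)).1; lia.
have eo j : e j = o j + (E0 - M) + j.
  elim: j => [|j IH]; first by rewrite o0 e0; lia.
  by rewrite oS eS IH; lia.
have cons j d (i : int) : (0 <= (o j)%:Z + i)%R -> ((o j)%:Z + i < (e j)%:Z)%R ->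
   [/\ (0 <= (o (j+d)%N)%:Z + i)%R, ((o (j+d)%N)%:Z + i < (e (j+d)%N)%:Z)%R &
       u (absz ((o (j+d)%N)%:Z + i)%R) = u (absz ((o j)%:Z + i)%R)].
  move=> h1 h2; elim: d => [|d [IH1 IH2 IH3]]; first by rewrite addn0.
  rewrite addnS oS eS; have [pp ppt] := pP (e (j+d)%N).
  split; try lia.
  rewrite -IH3 -(ppt (absz ((o (j+d)%N)%:Z + i)%R)); last lia.
  congr u; lia.
pose b (i : int) := u (absz ((o (absz i))%:Z + i)%R).
have inr j (i : int) : (absz i <= j)%N -> (0 <= (o j)%:Z + i)%R /\ ((o j)%:Z + i < (e j)%:Z)%R.
  by move=> h; have := oge j; have := eo j; lia.
have bj j (i : int) : (absz i <= j)%N -> b i = u (absz ((o j)%:Z + i)%R).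
  move=> h; have [h1 h2] := inr _ _ (leqnn (absz i)).
  by have := cons (absz i) (j - absz i) i h1 h2; rewrite subnKC // => -[_ _ ->].
exists b; split.
  move=> q k; exists (absz ((o (absz q + k)%N)%:Z + q)%R) => i hi /=.
  rewrite (bj (absz q + k)); last lia.
  by congr u; have := oge (absz q + k); lia.
move=> t ht.
have [h1 h2] : (0 <= (o 0)%:Z + (t%:Z - M%:Z))%R /\ ((o 0)%:Z + (t%:Z - M%:Z) < (e 0)%:Z)%R.
  by rewrite o0 e0; lia.
have := cons 0 (absz (t%:Z - M%:Z)%R) _ h1 h2; rewrite add0n => -[_ _ H].
by rewrite /b H o0; congr u; lia.
Qed.

Lemma later_occ u (hu : sturmian u) m k : exists2 m', m < m' & win u m' k = win u m k.
Proof.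
have [p hp /win_eqP H] := prefix_rec hu (m + k).
exists (p + m); first lia.
apply/win_eqP => i hi; rewrite -addnA H //; lia.
Qed.

Lemma left_ext u (hu : sturmian u) w : occurs u w -> exists a, occurs u (a :: w).
Proof.
move=> [m Hm]; have [m' hm' E] := later_occ hu m (size w).
exists (u m'.-1); apply/occursP; exists m'.-1 => -[|i] /= hi.
  by rewrite addn0.
have := congr1 (nth false ^~ i) (etrans Hm (esym E)); rewrite /= nth_mkseq // => ->.
congr u; lia.
Qed.

Lemma ls_unique u (hu : sturmian u) V1 V2 : size V1 = size V2 ->
  occurs u (false :: V1) -> occurs u (true :: V1) ->
  occurs u (false :: V2) -> occurs u (true :: V2) -> V1 = V2.
Proof.
move=> s12 f1 t1 f2 t2; apply: NNPP => hne.
case E: (size V1) => [|m].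
  by apply: hne; rewrite (size0nil E); rewrite E in s12; rewrite (size0nil (esym s12)).
pose c w := dec (occurs u (true :: w)).
pose T := [seq c w :: w | w <- lang u m.+1] ++ [:: ~~ c V1 :: V1; ~~ c V2 :: V2].
have : size T <= size (lang u m.+2).
  apply: uniq_leq_size.
    rewrite cat_uniq map_inj_uniq ?uniq_lang; last by move=> ? ? [].
    rewrite /= orbF andbT inE negb_or -andbA; apply/and3P; split.
    - by apply/negP => /mapP [w _ [E1 E2]]; move: E1; rewrite E2; case: (c w).
    - by apply/negP => /mapP [w _ [E1 E2]]; move: E1; rewrite E2; case: (c w).
    - by apply/negP => /eqP [_ E2].
  move=> z; rewrite mem_cat => /orP [/mapP [w /mem_lang [sw ow] ->]|].
    apply/mem_lang; split; first by rewrite /= sw.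
    have [Hp|Hn] := classic (occurs u (true :: w)); rewrite /c ?(dec_true Hp) // (dec_false Hn).
    by have [[] Ha] := left_ext hu ow.
  rewrite !inE => /orP [] /eqP ->; apply/mem_lang; (split; first by rewrite /= ?E -?s12 ?E).
    by case: (c V1).
  by case: (c V2).
by rewrite size_cat size_map /= !(size_lang hu) //; lia.
Qed.

Lemma fol_behead u w y : fol u w y -> fol u (behead w) y.
Proof.
case: w => [|a V] //= [xy [b [xb hb by_]]]; split => //; exists b; split => // k hk.
have := hb k.+1; rewrite /= ltnS => /(_ hk) <-.
congr b; lia.
Qed.

Lemma occ_nth u w : occurs u w -> exists m, forall i, i < size w -> nth false w i = u (m + i).
Proof. by move/occursP. Qed.

Lemma main_fwd u (hu : sturmian u) L a V :
  occurs u (false :: L) -> occurs u (true :: L) -> size V = size L -> 1 <= size V ->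
  significant u (a :: V) -> V = L.
Proof.
move=> o0 o1 sVL sV1 [_ ow _ [y [fy nfy]]].
case: fy => [xy [b [xb hb by_]]].
have [m Hm] := xb (- (size V)%:Z)%R (size V).+1.
have occ : occurs u (b (- (size V)%:Z)%R :: V).
  apply/occursP; exists m => -[|i] hi.
    by rewrite -Hm //=; congr b; lia.
  have := hb i; rewrite /= => /(_ hi) <-.
  rewrite -Hm //; congr b; lia.
have hne : b (- (size V)%:Z)%R <> a.
  move=> Ea; apply: nfy; split => //; exists b; split => // -[|k] hk /=.
    by rewrite -Ea; congr b; lia.
  have := hb k; rewrite /= => /(_ hk) <-.
  congr b; lia.
have key : forall c d : bool, c <> d -> occurs u (c :: V) -> occurs u (d :: V) ->
  occurs u (false :: V) /\ occurs u (true :: V) by case; case.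
have [o2 o3] := key _ _ hne occ ow.
exact (ls_unique hu sVL o2 o3 o0 o1).
Qed.

Lemma take_win u m k N : k <= N -> take k (win u m N) = win u m k.
Proof. by move=> h; rewrite /win /mkseq -map_take take_iota (minn_idPl h). Qed.

Lemma exists_sep u (hu : sturmian u) L a :
  occurs u (false :: L) -> occurs u (true :: L) ->
  exists z, occurs u (~~ a :: L ++ z) /\ ~ occurs u (a :: L ++ z).
Proof.
move=> o0 o1; apply: NNPP => Hn.
have Hall z : occurs u (~~ a :: L ++ z) -> occurs u (a :: L ++ z).
  by move=> h; apply: NNPP => h'; apply: Hn; exists z.
have [m Hm] : occurs u (~~ a :: L) by case: a {Hn Hall}.
have [m' hm' Em] := later_occ hu m (size L).+1.
apply: (@not_eperiodic u hu m (m' - m)); first lia.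
move=> t; have -> : m + (m' - m) + t = m' + t by lia.
pose N := (size L).+1 + t.+1.
have dec m1 : win u m1 (size L).+1 = ~~ a :: L ->
    win u m1 N = ~~ a :: L ++ drop (size L).+1 (win u m1 N).
  move=> E1; rewrite -{1}(cat_take_drop (size L).+1 (win u m1 N)) take_win ?E1 //.
  rewrite /N; lia.
have E1 := dec m (esym Hm).
have E2 := dec m' (etrans Em (esym Hm)).
have Hs : size (L ++ drop (size L).+1 (win u m N)) = size (L ++ drop (size L).+1 (win u m' N)).
  by rewrite !size_cat !size_drop !size_mkseq.
have l1 : occurs u (~~ a :: L ++ drop (size L).+1 (win u m N)) by rewrite -E1; apply: occurs_win.
have l2 : occurs u (~~ a :: L ++ drop (size L).+1 (win u m' N)) by rewrite -E2; apply: occurs_win.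
have key : forall (c : bool) V, occurs u (~~ c :: V) -> occurs u (c :: V) ->
  occurs u (false :: V) /\ occurs u (true :: V) by case.
have [f1 t1] := key _ _ l1 (Hall _ l1).
have [f2 t2] := key _ _ l2 (Hall _ l2).
have := ls_unique hu Hs f1 t1 f2 t2 => /(congr1 (cons (~~ a))); rewrite -E1 -E2.
by move/win_eqP => /(_ t) -> //; rewrite /N; lia.
Qed.

Lemma main_bwd u (hu : sturmian u) L a :
  occurs u (false :: L) -> occurs u (true :: L) -> 1 <= size L -> significant u (a :: L).
Proof.
move=> o0 o1 sL1; split.
- by rewrite /= ltnS.
- by case: a.
- by move=> y /fol_behead.
have [z [oz noz]] := exists_sep hu a o0 o1.
have [m0 Hoz] := occ_nth oz.
pose M := m0 + size L.
pose E := m0 + (size L).+1 + size z.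
have [b [xb hb]] := xt_exists hu M E.
exists (fun i : nat => b (Posz i)); split.
  split.
    by move=> k; have [m1 Hm1] := xb 0%R k; exists m1 => i hi; rewrite -Hm1 // add0r.
  exists b; split => // k /= hk.
  have := Hoz k.+1; rewrite /= nth_cat hk size_cat ltnS => /(_ (ltn_addr _ hk)) ->.
  rewrite -hb; last by rewrite /E; lia.
  congr b; rewrite /M; lia.
move=> [_ [b' [xb' hb' by']]]; apply: noz; apply/occursP.
have [m2 Hm2] := xb' (- (size L)%:Z)%R (size (a :: L ++ z)).
exists m2 => i hi; rewrite -Hm2 //.
case: (ltnP i (size L).+1) => hi2.
  have := hb' i hi2; rewrite /= => H.
  rewrite -cat_cons nth_cat /= hi2 -H; congr b'; lia.
rewrite -cat_cons nth_cat /= ltnNge hi2 /=.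
have -> : (- (size L)%:Z + i%:Z)%R = (Posz (i - size L)%N) by lia.
rewrite by' (_ : (Posz (i - size L)%N) = ((m0 + i)%:Z - M%:Z)%R); last by rewrite /M; lia.
rewrite hb; last by move: hi; rewrite /= size_cat /E; lia.
rewrite -Hoz; last by move: hi; rewrite /= !size_cat.
by rewrite -cat_cons nth_cat /= ltnNge hi2.
Qed.

Unset Implicit Arguments.
Theorem proposition4p7 (u : nat -> bool) (hu : sturmian u) (n : nat) (hn : (2 <= n)%N) :
  forall L : seq bool,
    size L = n.-1 -> occurs u (false :: L) -> occurs u (true :: L) ->
    forall w : seq bool, size w = n ->
      (significant u w <-> (w = false :: L \/ w = true :: L)).
Proof.
move=> L sL o0 o1 w sw; split.
  case: w sw => [|a V] /= sw sig; first by move: hn; rewrite -sw.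
  have sVL : size V = size L by rewrite sL -sw.
  have sV1 : 1 <= size V by lia.
  rewrite (main_fwd hu o0 o1 sVL sV1 sig).
  by clear sig; case: a; [right|left].
have sL1 : 1 <= size L by rewrite sL; lia.
by case=> ->; apply: main_bwd.
Qed.
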